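(* Let $L$ be a positive definite lattice with $\operatorname{rank} L\geq 4$. Then $\mathcal{E}(\operatorname{gen} L)=\mathbb{N}\setminus Q(\operatorname{gen} L)$ is a finite union of admissible arithmetic progressions.
   Context: A lattice is a finitely generated $\mathbb{Z}$-submodule $L$ of a finite-dimensional quadratic space $(V,Q)$ over $\mathbb{Q}$, with associated symmetric bilinear form $B$ satisfying $Q(v)=B(v,v)$; it is assumed throughout that the scale of $L$ (the fractional ideal generated by $\{B(x,y):x,y\in L\}$) equals $\mathbb{Z}$. $L$ is positive definite if $Q(v)>0$ for all nonzero $v\in L$. $\mathbb{N}$ is the set of positive integers. For a prime $p$, $L_p=\mathbb{Z}_p\otimes L$ is the localization, and $Q(L_p)=\{Q(v):v\in L_p\}\subseteq\mathbb{Z}_p$. $\operatorname{gen} L$ is the genus of $L$, and $Q(\operatorname{gen} L)=\{a\in\mathbb{Z}: a\in Q(K)\text{ for some }K\in\operatorname{gen}L\}$; equivalently, $a\in Q(\operatorname{gen}L)$ iff $a\in Q(L_p)$ for all primes $p$. For positive integers $a<m$, $\mathcal{A}_{a,m}=\{a+mx : x\in\mathbb{N}\cup\{0\}\}$, and $\mathcal{A}_{a,m}$ is admissible if $\operatorname{ord}_p a<\operatorname{ord}_p m$ for every prime $p\mid m$. *)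

(* Defs.v *)
From mathcomp Require Import all_boot all_order all_algebra.
Set Implicit Arguments. Unset Strict Implicit. Unset Printing Implicit Defensive.
Import Order.TTheory GRing.Theory Num.Theory.
Local Open Scope ring_scope.

(* A lattice L of rank n is represented by the Gram matrix G of a Z-basis:
   G i j = B(e_i, e_j), so Q(sum x_i e_i) = x^T G x. *)
Definition qform (n : nat) (G : 'M[int]_n) (x : 'cV[int]_n) : int :=
  (x^T *m G *m x) 0 0.

Definition symmetric_gram (n : nat) (G : 'M[int]_n) : Prop := G^T = G.

Definition pos_def (n : nat) (G : 'M[int]_n) : Prop :=
  forall x : 'cV[int]_n, x != 0 -> 0 < qform G x.

(* scale of L equals Z: the ideal generated by the B(e_i,e_j) is Z,
   i.e. the only natural number dividing all Gram entries is 1 *)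
Definition scale_one (n : nat) (G : 'M[int]_n) : Prop :=
  forall d : nat, (forall i j, (d %| `|G i j|)%N) -> d = 1%N.

(* a \in Q(L_p), where L_p = Z_p (x) L.  Since Z^n is dense in Z_p^n and
   Q(Z_p^n) is compact, this holds iff a is represented by L modulo every
   power of p. *)
Definition loc_repr (n : nat) (G : 'M[int]_n) (p : nat) (a : int) : Prop :=
  forall k : nat, exists x : 'cV[int]_n,
    (qform G x = a %[mod ((p ^ k)%N)%:Z])%Z.

(* a \in Q(gen L)  iff  a \in Q(L_p) for all primes p *)
Definition in_Q_gen (n : nat) (G : 'M[int]_n) (a : int) : Prop :=
  forall p : nat, prime p -> loc_repr G p a.

Definition in_AP (a m : nat) (b : nat) : Prop :=
  exists x : nat, b = (a + m * x)%N.

Definition admissible (a m : nat) : Prop :=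
  forall p : nat, prime p -> (p %| m)%N -> (logn p a < logn p m)%N.

(* Main.v *)
Require Import Defs.
From mathcomp Require Import all_boot all_order all_algebra.
From mathcomp Require Import zify ring lra.
From Stdlib Require Import Classical.
Set Implicit Arguments. Unset Strict Implicit. Unset Printing Implicit Defensive.
Import Order.TTheory GRing.Theory Num.Theory.
Local Open Scope ring_scope.

Lemma prime_coprimez (p : nat) (B : int) : prime p -> ~~ (p%:Z %| B)%Z -> coprimez B p.
Proof.
move=> pp nd; rewrite coprimezE coprime_sym prime_coprime //.
Qed.

Lemma solve_lin (p : nat) (A B : int) : prime p -> ~~ (p%:Z %| B)%Z ->
  exists w, (p%:Z %| A + B * w)%Z.
Proof.
move=> pp nd; have cp := prime_coprimez pp nd.
have [u [v Huv]] := Bezoutz B p.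
move: cp; rewrite /coprimez => /eqP g1; rewrite g1 in Huv.
exists (- (A * u)); apply/dvdzP; exists (A * v).
have -> : A + B * - (A * u) = A * (1 - u * B) by ring.
by rewrite -Huv; ring.
Qed.

Lemma hensel (p t : nat) (a b g : int) : prime p ->
  (p%:Z ^+ t %| b)%Z -> ~~ (p%:Z ^+ t.+1 %| b)%Z -> (p%:Z ^+ (2*t).+1 %| a)%Z ->
  forall m, exists h, (p%:Z ^+ t.+1 %| h)%Z /\
     (p%:Z ^+ ((2*t).+1 + m) %| a + b * h + g * h ^+ 2)%Z.
Proof.
move=> pp dtb ndb da; elim=> [|m [h [dh dm]]].
  by exists 0; rewrite rpred0 addn0 mulr0 addr0 expr0n /= mulr0 addr0.
have db2 : (p%:Z ^+ t %| b + g * h *+ 2)%Z.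
  rewrite rpredD // -mulr_natr; apply: dvdz_mulr; apply: dvdz_mull.
  by apply: dvdz_trans dh; rewrite dvdz_exp2l.
have [B eB] := dvdzP db2.
have [A eA] := dvdzP dm.
have nB : ~~ (p%:Z %| B)%Z.
  apply/negP => /dvdzP [c ec]; move/negP: ndb; apply.
  have -> : b = (b + g * h *+ 2) - g * h *+ 2 by ring.
  rewrite rpredB // ?eB ?ec.
    by apply/dvdzP; exists c; rewrite exprS; ring.
  rewrite -mulr_natr; apply: dvdz_mulr; exact: dvdz_mull.
have [w ew] := solve_lin A pp nB.
exists (h + p%:Z ^+ (t.+1 + m) * w); split.
  rewrite rpredD //; apply: dvdz_mulr; by rewrite dvdz_exp2l // leq_addr.
set u := p%:Z ^+ (t.+1 + m) * w.
have -> : a + b * (h + u) + g * (h + u) ^+ 2 = (a + b * h + g * h ^+ 2) + (b + g * h *+ 2) * u + g * u ^+ 2.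
  by rewrite /u; ring.
rewrite eA eB /u.
have -> : A * p%:Z ^+ ((2 * t).+1 + m) + B * p%:Z ^+ t * (p%:Z ^+ (t.+1 + m) * w) +
   g * (p%:Z ^+ (t.+1 + m) * w) ^+ 2 =
   (A + B * w) * p%:Z ^+ ((2 * t).+1 + m) + (g * w ^+2 * p%:Z ^+ m) * p%:Z ^+ ((2*t).+2 + m).
  have e1 : p%:Z ^+ ((2 * t).+1 + m) = p%:Z ^+ t * p%:Z ^+ t * p%:Z * p%:Z ^+ m.
    by rewrite exprD exprS mul2n -addnn exprD; ring.
  have e2 : p%:Z ^+ (t.+1 + m) = p%:Z ^+ t * p%:Z * p%:Z ^+ m.
    by rewrite exprD exprS; ring.
  have e3 : p%:Z ^+ ((2 * t).+2 + m) = p%:Z ^+ t * p%:Z ^+ t * p%:Z * p%:Z * p%:Z ^+ m.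
    by rewrite exprD !exprS mul2n -addnn exprD; ring.
  rewrite e1 e2 e3; ring.
rewrite rpredD //.
  rewrite addnS exprSr mulrC; exact: dvdz_mul.
apply: dvdz_mull; by rewrite dvdz_exp2l // addnS.
Qed.

Lemma PoszX (p k : nat) : ((p ^ k)%N)%:Z = p%:Z ^+ k.
Proof. by elim: k => [|k IH]; rewrite ?expnS ?exprS // PoszM IH. Qed.

Definition Rep (V : Type) (q : V -> int) (p : nat) (c : int) : Prop :=
  forall k, exists v, (p%:Z ^+ k %| q v - c)%Z.

Definition qd (d y : nat -> int) : int := \sum_(i < 4) d i * y i ^+ 2.

Lemma qd4 d y : qd d y = d 0%N * y 0%N ^+ 2 + d 1%N * y 1%N ^+ 2 + d 2%N * y 2%N ^+ 2 + d 3%N * y 3%N ^+ 2.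
Proof. by rewrite /qd !big_ord_recl big_ord0 addr0 /= !addrA. Qed.

Lemma Rep0 V (q : V -> int) p (v0 : V) : q v0 = 0 -> Rep q p 0.
Proof. by move=> h k; exists v0; rewrite h subr0 rpred0. Qed.

Lemma Rep_scale (d d2 s : nat -> int) (M c : int) p :
  (forall i, (i < 4)%N -> d i * s i ^+ 2 = M * d2 i) ->
  Rep (qd d2) p c -> Rep (qd d) p (M * c).
Proof.
move=> hd R k; have [z hz] := R k.
exists (fun i => s i * z i).
have -> : qd d (fun i => s i * z i) = M * qd d2 z.
  rewrite /qd big_distrr /=; apply: eq_bigr => i _.
  transitivity (d i * s i ^+ 2 * z i ^+ 2); first by ring.
  by rewrite hd //; ring.
by rewrite -mulrBr; apply: dvdz_mull.
Qed.

Lemma Rep_sq d p c (l : int) : Rep (qd d) p c -> Rep (qd d) p (l ^+ 2 * c).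
Proof. apply: Rep_scale => i _; exact: mulrC. Qed.

Definition upd (y : nat -> int) (i : nat) (h : int) :=
  fun j => if j == i then y i + h else y j.

Lemma qd_upd d y i h : (i < 4)%N ->
  qd d (upd y i h) = qd d y + (d i * y i *+ 2) * h + d i * h ^+ 2.
Proof.
move=> hi; rewrite /qd (bigD1 (Ordinal hi)) //= [in RHS](bigD1 (Ordinal hi)) //=.
rewrite /upd eqxx.
have -> : \sum_(i0 < 4 | i0 != Ordinal hi) d i0 * (if nat_of_ord i0 == i then y i + h else y i0) ^+ 2
   = \sum_(i0 < 4 | i0 != Ordinal hi) d i0 * y i0 ^+ 2.
  apply: eq_bigr => j hj; case: eqP => // e; exfalso; move/negP: hj; apply.
  by apply/eqP; apply: val_inj.
ring.
Qed.

Lemma qd_hensel p t d y i c : prime p -> (i < 4)%N ->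
  (p%:Z ^+ t %| d i * y i *+ 2)%Z -> ~~ (p%:Z ^+ t.+1 %| d i * y i *+ 2)%Z ->
  (p%:Z ^+ (2*t).+1 %| qd d y - c)%Z -> Rep (qd d) p c.
Proof.
move=> pp hi h1 h2 h3 k.
have [h [_ hh]] := hensel (d i) pp h1 h2 h3 k.
exists (upd y i h); rewrite qd_upd //.
have -> : qd d y + d i * y i *+ 2 * h + d i * h ^+ 2 - c =
   (qd d y - c) + d i * y i *+ 2 * h + d i * h ^+ 2 by ring.
apply: dvdz_trans hh; apply: dvdz_exp2l; rewrite addnC; exact: leq_addr.
Qed.

Lemma rmod_lt (p : nat) (pp : prime p) (z : int) : (`|(z %% p%:Z)%Z|%N < p)%N.
Proof.
have hp : (0 : int) < p%:Z by rewrite ltz_nat prime_gt0.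
have := ltz_pmod z hp; have := modz_ge0 z (lt0r_neq0 hp).
move=> h1 h2; rewrite -ltz_nat gez0_abs //.
Qed.

Definition rmod (p : nat) (pp : prime p) (z : int) : 'I_p := Ordinal (rmod_lt pp z).

Lemma rmod_eq p (pp : prime p) z z' : rmod pp z = rmod pp z' -> (p%:Z %| z - z')%Z.
Proof.
move=> /(congr1 (fun x : 'I_p => (nat_of_ord x)%:Z)) /=.
have hp : (0 : int) < p%:Z by rewrite ltz_nat prime_gt0.
rewrite !gez0_abs ?modz_ge0 ?lt0r_neq0 // => e.
by rewrite -eqz_mod_dvd; apply/eqP.
Qed.

Lemma coprime_pz p (pp : prime p) (a : int) : ~~ (p%:Z %| a)%Z -> coprimez p a.
Proof. by move=> nd; rewrite coprimezE prime_coprime. Qed.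

Lemma sq_inj p (pp : prime p) (podd : odd p) (a : int) (x y : 'I_(p./2).+1) : ~~ (p%:Z %| a)%Z ->
  (p%:Z %| a * (x%:Z) ^+ 2 - a * (y%:Z) ^+ 2)%Z -> x = y.
Proof.
move=> na.
have -> : a * (x%:Z) ^+ 2 - a * (y%:Z) ^+ 2 = a * ((x%:Z - y%:Z) * (x%:Z + y%:Z)) by ring.
rewrite Gauss_dvdzr ?(coprime_pz pp) // dvdzE abszM Euclid_dvdM // => /orP [] hd.
- apply: val_inj => /=.
  have hx := ltn_ord x; have hy := ltn_ord y.
  have hh := odd_double_half p; rewrite podd in hh.
  move: hd; case: (posnP (absz (x%:Z - y%:Z))) => [e|pos hd].
    move=> _; lia.
  have := dvdn_leq pos hd; rewrite -!muln2 in hh *; lia.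
- have hx := ltn_ord x; have hy := ltn_ord y.
  have hh := odd_double_half p; rewrite podd in hh.
  move: hd; case: (posnP (absz (x%:Z + y%:Z))) => [e|pos hd].
    move=> _; apply: val_inj => /=; lia.
  have := dvdn_leq pos hd; rewrite -!muln2 in hh *; lia.
Qed.

Lemma binary_any p (pp : prime p) (podd : odd p) (a1 a2 c : int) : ~~ (p%:Z %| a1)%Z -> ~~ (p%:Z %| a2)%Z ->
  exists x y : int, (p%:Z %| a1 * x ^+ 2 + a2 * y ^+ 2 - c)%Z.
Proof.
move=> n1 n2.
pose fA := fun x : 'I_(p./2).+1 => rmod pp (a1 * (x%:Z) ^+ 2).
pose fB := fun x : 'I_(p./2).+1 => rmod pp (c - a2 * (x%:Z) ^+ 2).
have iA : injective fA.
  move=> x y /rmod_eq; exact: sq_inj.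
have iB : injective fB.
  move=> x y /rmod_eq h; apply: (sq_inj pp podd n2).
  have -> : a2 * (x%:Z) ^+ 2 - a2 * (y%:Z) ^+ 2 = - ((c - a2 * (x%:Z) ^+ 2) - (c - a2 * (y%:Z) ^+ 2)) by ring.
  by rewrite rpredN.
have cA : #|fA @: setT| = (p./2).+1 by rewrite card_imset // cardsT card_ord.
have cB : #|fB @: setT| = (p./2).+1 by rewrite card_imset // cardsT card_ord.
have cU := cardsUI (fA @: setT) (fB @: setT).
have cM : (#|fA @: setT :|: fB @: setT| <= p)%N by rewrite -[X in (_ <= X)%N]card_ord max_card.
have hh := odd_double_half p; rewrite podd in hh.
have : (0 < #|fA @: setT :&: fB @: setT|)%N by rewrite -!muln2 in hh; lia.
rewrite card_gt0 => /set0Pn [r]; rewrite inE => /andP [] /imsetP [x _ ex] /imsetP [y _ ey].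
exists x%:Z, y%:Z.
have := rmod_eq (esym (etrans (esym ex) ey)).
have -> : a1 * (x%:Z) ^+ 2 + a2 * (y%:Z) ^+ 2 - c = - ((c - a2 * (y%:Z) ^+ 2) - a1 * (x%:Z) ^+ 2) by ring.
by rewrite rpredN.
Qed.


Definition vec3 (i j l : nat) (x y z : int) : nat -> int :=
  fun m => if m == i then x else if m == j then y else if m == l then z else 0.

Lemma qd_vec3 d i j l x y z : (i < 4)%N -> (j < 4)%N -> (l < 4)%N ->
  i != j -> i != l -> j != l ->
  qd d (vec3 i j l x y z) = d i * x ^+ 2 + d j * y ^+ 2 + d l * z ^+ 2.
Proof.
rewrite qd4 /vec3.
case: i => [|[|[|[|i]]]] //; case: j => [|[|[|[|j]]]] //; case: l => [|[|[|[|l]]]] //= *; ring.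
Qed.

Lemma qd_vec2 d i j x y : (i < 4)%N -> (j < 4)%N -> i != j ->
  qd d (vec3 i j i x y 0) = d i * x ^+ 2 + d j * y ^+ 2.
Proof.
rewrite qd4 /vec3.
case: i => [|[|[|[|i]]]] //; case: j => [|[|[|[|j]]]] //= *; ring.
Qed.

Lemma vec3_i i j l x y z : vec3 i j l x y z i = x.
Proof. by rewrite /vec3 eqxx. Qed.
Lemma vec3_j i j l x y z : i != j -> vec3 i j l x y z j = y.
Proof. by rewrite /vec3 eq_sym => /negbTE ->; rewrite eqxx. Qed.
Lemma vec3_l i j l x y z : i != l -> j != l -> vec3 i j l x y z l = z.
Proof. by rewrite /vec3 eq_sym => /negbTE ->; rewrite eq_sym => /negbTE ->; rewrite eqxx. Qed.

Lemma nd2 p (a : int) : prime p -> odd p -> ~~ (p%:Z %| a)%Z -> ~~ (p%:Z %| a *+ 2)%Z.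
Proof.
move=> pp po na; rewrite -mulr_natr dvdzE abszM Euclid_dvdM //.
rewrite dvdzE in na; rewrite negb_or na /=.
apply/negP => /dvdn_leq h; have := h isT; have := prime_gt1 pp.
case: p pp po {na h} => [|[|[|p]]] //.
Qed.

Lemma ndM p (a b : int) : prime p -> ~~ (p%:Z %| a)%Z -> ~~ (p%:Z %| b)%Z -> ~~ (p%:Z %| a * b)%Z.
Proof.
move=> pp; rewrite !dvdzE abszM Euclid_dvdM // => /negbTE -> /negbTE ->; done.
Qed.

Lemma ternary_rep p d i j l c : prime p -> odd p ->
  (i < 4)%N -> (j < 4)%N -> (l < 4)%N -> i != j -> i != l -> j != l ->
  ~~ (p%:Z %| d i)%Z -> ~~ (p%:Z %| d j)%Z -> ~~ (p%:Z %| d l)%Z ->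
  Rep (qd d) p c.
Proof.
move=> pp po hi hj hl ij il jl ni nj nl.
have [x [y hxy]] := binary_any pp po (c - d l) ni nj.
apply: (@qd_hensel p 0 d (vec3 i j l x y 1) l) => //.
- rewrite vec3_l // mulr1 expr1; exact: nd2.
- rewrite muln0 expr1 qd_vec3 // expr1n mulr1.
  by have -> : d i * x ^+ 2 + d j * y ^+ 2 + d l - c = d i * x ^+ 2 + d j * y ^+ 2 - (c - d l) by ring.
Qed.

Lemma binary_rep p d i j c : prime p -> odd p ->
  (i < 4)%N -> (j < 4)%N -> i != j ->
  ~~ (p%:Z %| d i)%Z -> ~~ (p%:Z %| d j)%Z -> ~~ (p%:Z %| c)%Z ->
  Rep (qd d) p c.
Proof.
move=> pp po hi hj ij ni nj nc.
have [x [y hxy]] := binary_any pp po c ni nj.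
have hq : (p%:Z ^+ (2 * 0).+1 %| qd d (vec3 i j i x y 0) - c)%Z by rewrite qd_vec2.
case: (boolP (p%:Z %| x)%Z) => hx.
  case: (boolP (p%:Z %| y)%Z) => hy.
    exfalso; move/negP: nc; apply.
    have -> : c = d i * x ^+ 2 + d j * y ^+ 2 - (d i * x ^+ 2 + d j * y ^+ 2 - c) by ring.
    rewrite rpredB // rpredD // dvdz_mull // expr2 dvdz_mull //.
  apply: (qd_hensel (i := j) pp hj _ _ hq); first by rewrite expr0 dvd1z.
  by rewrite vec3_j // expr1; apply: nd2 => //; apply: ndM.
apply: (qd_hensel (i := i) pp hi _ _ hq); first by rewrite expr0 dvd1z.
by rewrite vec3_i // expr1; apply: nd2 => //; apply: ndM.
Qed.

Definition fidx (P : pred nat) := [seq i <- iota 0 4 | P i].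

Lemma fidx_P (P : pred nat) k : (k < size (fidx P))%N ->
  (nth 0%N (fidx P) k < 4)%N /\ P (nth 0%N (fidx P) k).
Proof.
move=> hk; have := mem_nth 0%N hk; rewrite mem_filter mem_iota => /andP [-> h].
by split; move: h; rewrite add0n.
Qed.

Lemma fidx_neq (P : pred nat) k k' : (k < size (fidx P))%N -> (k' < size (fidx P))%N ->
  k != k' -> nth 0%N (fidx P) k != nth 0%N (fidx P) k'.
Proof.
move=> h1 h2 nk; rewrite nth_uniq //; exact/filter_uniq/iota_uniq.
Qed.

Lemma fidx_size (P : pred nat) : (size (fidx P) + size (fidx (fun i => ~~ P i)) = 4)%N.
Proof. by rewrite !size_filter (count_predC P) size_iota. Qed.

Definition dpp (p : nat) (f : nat -> bool) (u : nat -> int) : nat -> int :=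
  fun i => p%:Z ^+ f i * u i.

Lemma core_odd p f u tau : prime p -> odd p ->
  (forall i, (i < 4)%N -> ~~ (p%:Z %| u i)%Z) ->
  (2 <= size (fidx (fun i => ~~ f i)))%N -> ~~ (p%:Z %| tau)%Z ->
  Rep (qd (dpp p f u)) p (p%:Z ^+ 2 * tau) /\ Rep (qd (dpp p f u)) p (p%:Z ^+ 3 * tau).
Proof.
move=> pp po hu hA ht.
set A := fidx (fun i => ~~ f i).
have [i0 fi0] := fidx_P (ltnW hA).
have [i1 fi1] := fidx_P hA.
have n01 := fidx_neq (ltnW hA) hA (isT : 0%N != 1%N).
have ui : forall i, (i < 4)%N -> ~~ f i -> ~~ (p%:Z %| dpp p f u i)%Z.
  by move=> i hi /negbTE hf; rewrite /dpp hf expr0 mul1r; apply: hu.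
have R1 : Rep (qd (dpp p f u)) p tau.
  by apply: (binary_rep (i := nth 0%N A 0) (j := nth 0%N A 1)) => //; apply: ui.
split; first exact: Rep_sq.
case: (ltnP 2 (size A)) => h3.
  have [i2 fi2] := fidx_P h3.
  have n02 := fidx_neq (ltnW hA) h3 (isT : 0%N != 2%N).
  have n12 := fidx_neq hA h3 (isT : 1%N != 2%N).
  by apply: (ternary_rep (i := nth 0%N A 0) (j := nth 0%N A 1) (l := nth 0%N A 2)) => //; apply: ui.
have hB : (2 <= size (fidx f))%N.
  have := fidx_size f; rewrite -/A; lia.
have [k0 fk0] := fidx_P (ltnW hB).
have [k1 fk1] := fidx_P hB.
have m01 := fidx_neq (ltnW hB) hB (isT : 0%N != 1%N).
pose d3 := fun i => if f i then u i else p%:Z * u i.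
have R2 : Rep (qd d3) p tau.
  apply: (binary_rep (i := nth 0%N (fidx f) 0) (j := nth 0%N (fidx f) 1)) => //.
  1,2: by rewrite /d3 ?fk0 ?fk1; apply: hu.
have R3 : Rep (qd (dpp p f u)) p (p%:Z * tau).
  apply: (Rep_scale (s := fun i => if f i then 1 else p%:Z)) R2 => i _.
  by rewrite /dpp /d3; case: (f i); rewrite ?expr1 ?expr0; ring.
have := Rep_sq p%:Z R3.
by rewrite mulrA -exprSr.
Qed.

Definition bits := [:: 0%N; 1%N].
Definition odds := [:: 1%N; 3%N; 5%N; 7%N].
Definition zl := [:: 0%N; 1%N; 4%N].
Definition zs : seq (seq nat) :=
  flatten (map (fun a => flatten (map (fun b => flatten (map (fun c => map (fun e => [:: a; b; c; e]) zl) zl)) zl)) zl).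
Definition tm (fi ui zi : nat) : nat := (2 ^ fi * ui * zi)%N.
Definition S8 (f u z : seq nat) : nat :=
  sumn [seq tm (nth 0%N f i) (nth 0%N u i) (nth 0%N z i) | i <- iota 0 4].
Definition goodz (f z : seq nat) : bool :=
  has (fun i => (nth 0%N f i == 0%N) && (nth 0%N z i == 1%N)) (iota 0 4).
Definition reach (f u : seq nat) : seq nat := [seq (S8 f u z %% 8)%N | z <- zs & goodz f z].
Definition cond' (R : seq nat) : bool :=
  all (fun r => r \in R) odds && (all (fun r => ((2 * r) %% 8)%N \in R) odds || (0%N \in R)).
Definition cond (f u : seq nat) : bool := cond' (reach f u).
Definition allchk : bool :=
  all (fun f0 => all (fun f1 => all (fun f2 => all (fun f3 =>
    (count (fun x => x == 0%N) [:: f0; f1; f2; f3] < 2)%N ||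
    all (fun u0 => all (fun u1 => all (fun u2 => all (fun u3 =>
      cond [:: f0; f1; f2; f3] [:: u0; u1; u2; u3]) odds) odds) odds) odds) bits) bits) bits) bits.
Lemma allchk_ok : allchk = true.
Proof. vm_compute. reflexivity. Qed.
Lemma zs_ok : all (fun z => (size z == 4%N) && all (fun x => x \in zl) z) zs = true.
Proof. vm_compute. reflexivity. Qed.

Definition rt (x : nat) : nat := if x == 4%N then 2%N else x.

Lemma rt_sq x : x \in zl -> ((rt x)%:Z) ^+ 2 = x%:Z.
Proof. by rewrite !inE => /or3P [] /eqP ->. Qed.

Lemma odd_mod8 (u : int) : ~~ (2%:Z %| u)%Z -> `|(u %% 8%:Z)%Z|%N \in odds.
Proof.
move=> nu.
have h0 : (0 : int) <= (u %% 8%:Z)%Z by apply: modz_ge0.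
have h8 : (u %% 8%:Z)%Z < 8%:Z by apply: ltz_pmod.
have e := divz_eq u 8%:Z.
have h2 : ~~ (2%:Z %| (u %% 8%:Z)%Z)%Z.
  apply: contra nu => h; rewrite e rpredD // dvdz_mull //.
have er : (u %% 8%:Z)%Z = (`|(u %% 8%:Z)%Z|%N)%:Z by rewrite gez0_abs.
rewrite er ltz_nat in h8; rewrite er in h2.
move: h8 h2; case: `|(u %% 8%:Z)%Z|%N => [|[|[|[|[|[|[|[|n]]]]]]]] //.
Qed.

Lemma mod8_dvd (u : int) : (8%:Z %| u - (`|(u %% 8%:Z)%Z|%N)%:Z)%Z.
Proof.
rewrite gez0_abs ?modz_ge0 //.
have e := divz_eq u 8%:Z.
by rewrite [X in X - _]e addrK dvdz_mull.
Qed.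

Lemma nmod8_dvd (n : nat) : (8%:Z %| n%:Z - ((n %% 8)%N)%:Z)%Z.
Proof.
rewrite [X in X%:Z - _](divn_eq n 8) PoszD addrK PoszM dvdz_mull //.
Qed.

Definition fl (f : nat -> bool) : seq nat := [seq nat_of_bool (f i) | i <- iota 0 4].
Definition ul (u : nat -> int) : seq nat := [seq `|(u i %% 8%:Z)%Z|%N | i <- iota 0 4].

Lemma term8 (fi : bool) (u : int) (a : nat) : a \in zl ->
  (8%:Z %| 2%:Z ^+ fi * u * ((rt a)%:Z) ^+ 2 - (tm fi `|(u %% 8%:Z)%Z|%N a)%:Z)%Z.
Proof.
move=> ha; rewrite rt_sq // /tm !PoszM PoszX.
have -> : 2%:Z ^+ fi * u * a%:Z - 2%:Z ^+ fi * (`|(u %% 8%:Z)%Z|%N)%:Z * a%:Z =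
  (u - (`|(u %% 8%:Z)%Z|%N)%:Z) * (2%:Z ^+ fi * a%:Z) by ring.
exact/dvdz_mulr/mod8_dvd.
Qed.

Lemma rep2_reach (f : nat -> bool) (u : nat -> int) (c : int) (r : nat) :
  (forall i, (i < 4)%N -> ~~ (2%:Z %| u i)%Z) ->
  r \in reach (fl f) (ul u) -> (8%:Z %| c - r%:Z)%Z -> Rep (qd (dpp 2 f u)) 2 c.
Proof.
move=> hu /mapP [z]; rewrite mem_filter => /andP [gz zz] ->.
have := allP zs_ok z zz => /andP [/eqP sz /allP az].
move: z sz az gz {zz} => [|a [|b [|c' [|e [|]]]]] // _ az gz hc.
have ha : a \in zl by apply: az; rewrite inE eqxx.
have hb : b \in zl by apply: az; rewrite !inE eqxx ?orbT.
have hc' : c' \in zl by apply: az; rewrite !inE eqxx ?orbT.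
have he : e \in zl by apply: az; rewrite !inE eqxx ?orbT.
pose v := fun m => (rt (nth 0%N [:: a; b; c'; e] m))%:Z.
have hq : (8%:Z %| qd (dpp 2 f u) v - (S8 (fl f) (ul u) [:: a; b; c'; e])%:Z)%Z.
  rewrite qd4 /S8 /fl /ul /dpp /v /= addn0 !PoszD.
  have -> : forall x1 x2 x3 x4 y1 y2 y3 y4 : int, x1 + x2 + x3 + x4 - (y1 + (y2 + (y3 + y4))) =
     (x1 - y1) + (x2 - y2) + (x3 - y3) + (x4 - y4) by move=> *; ring.
  by apply: rpredD; last apply: term8 =>//; apply: rpredD; last apply: term8 =>//; apply: rpredD; apply: term8.
have h8 : (2%:Z ^+ (2 * 1).+1 %| qd (dpp 2 f u) v - c)%Z.
  have -> : qd (dpp 2 f u) v - c = (qd (dpp 2 f u) v - (S8 (fl f) (ul u) [:: a; b; c'; e])%:Z)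
     + ((S8 (fl f) (ul u) [:: a; b; c'; e])%:Z - ((S8 (fl f) (ul u) [:: a; b; c'; e] %% 8)%N)%:Z)
     - (c - ((S8 (fl f) (ul u) [:: a; b; c'; e] %% 8)%N)%:Z) by ring.
  by rewrite rpredB // rpredD // nmod8_dvd.
move: gz => /hasP [i]; rewrite mem_iota add0n /= => hi /andP [fi zi].
have fi' : f i = false.
  move: fi; rewrite /fl (nth_map 0%N) ?size_iota // nth_iota // add0n.
  by case: (f i).
apply: (qd_hensel (t := 1) (i := i) (y := v)) => //.
- rewrite expr1 -mulr_natr; exact: dvdz_mull.
- rewrite /dpp fi' expr0 mul1r /v (eqP zi) /= mulr1 -mulr_natr.
  apply/negP => /dvdzP [q eq]; move/negP: (hu i hi); apply; apply/dvdzP; exists q.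
  have : (2%:Z * (u i - q * 2%:Z)) = 0 by rewrite mulrBr mulrC eq; ring.
  by move/eqP; rewrite mulf_eq0 /= subr_eq0 => /eqP.
Qed.

Lemma mem_bits (b : bool) : nat_of_bool b \in bits.
Proof. by case: b. Qed.

Lemma core_two f u tau :
  (forall i, (i < 4)%N -> ~~ (2%:Z %| u i)%Z) ->
  (2 <= size (fidx (fun i => ~~ f i)))%N -> ~~ (2%:Z %| tau)%Z ->
  Rep (qd (dpp 2 f u)) 2 (2%:Z ^+ 2 * tau) /\ Rep (qd (dpp 2 f u)) 2 (2%:Z ^+ 3 * tau).
Proof.
move=> hu hA ht.
have hc : cond (fl f) (ul u).
  have := allchk_ok; rewrite /allchk.
  move=> /allP /(_ _ (mem_bits (f 0%N))) /allP /(_ _ (mem_bits (f 1%N)))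
         /allP /(_ _ (mem_bits (f 2%N))) /allP /(_ _ (mem_bits (f 3%N))) /orP [].
    move: hA; rewrite /fidx size_filter /=.
    by case: (f 0%N); case: (f 1%N); case: (f 2%N); case: (f 3%N).
  move=> /allP /(_ _ (odd_mod8 (hu 0%N isT))) /allP /(_ _ (odd_mod8 (hu 1%N isT)))
         /allP /(_ _ (odd_mod8 (hu 2%N isT))) /allP /(_ _ (odd_mod8 (hu 3%N isT))).
  by [].
move: hc; rewrite /cond /cond' => /andP [ho h2].
have hr := odd_mod8 ht.
have R1 : Rep (qd (dpp 2 f u)) 2 tau.
  apply: (rep2_reach hu (allP ho _ hr)); exact: mod8_dvd.
split; first exact: Rep_sq.
move: h2 => /orP [h2 | h0].
  have R2 : Rep (qd (dpp 2 f u)) 2 (2%:Z * tau).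
    apply: (rep2_reach hu (allP h2 _ hr)).
    set r := `|(tau %% 8%:Z)%Z|%N.
    have -> : 2%:Z * tau - ((2 * r) %% 8)%N%:Z =
      2%:Z * (tau - r%:Z) + (((2 * r)%N)%:Z - ((2 * r) %% 8)%N%:Z) by rewrite PoszM; ring.
    by rewrite rpredD ?nmod8_dvd // dvdz_mull // mod8_dvd.
  by have := Rep_sq 2%:Z R2; rewrite mulrA -exprSr.
apply: (rep2_reach hu h0); rewrite subr0; apply: dvdz_mulr; by [].
Qed.

Lemma pdecomp p (a : int) : prime p -> a != 0 ->
  a = p%:Z ^+ (logn p `|a|) * (a %/ p%:Z ^+ (logn p `|a|))%Z /\
  ~~ (p%:Z %| (a %/ p%:Z ^+ (logn p `|a|))%Z)%Z.
Proof.
move=> pp a0.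
have a0' : (0 < `|a|)%N by rewrite absz_gt0.
have h1 : (p%:Z ^+ (logn p `|a|) %| a)%Z by rewrite -PoszX dvdzE /= pfactor_dvdnn.
have e : a = p%:Z ^+ (logn p `|a|) * (a %/ p%:Z ^+ (logn p `|a|))%Z by rewrite mulrC divzK.
split=> //; apply/negP => /dvdzP [q eq].
have : (p%:Z ^+ (logn p `|a|).+1 %| a)%Z.
  by rewrite [X in (_ %| X)%Z]e eq exprSr mulrA [_ * q]mulrC -mulrA dvdz_mull // mulrC.
by rewrite -PoszX dvdzE /= pfactor_dvdn // ltnn.
Qed.

Lemma even_diff a b : (a <= b)%N -> odd a = odd b -> b = (a + 2 * (b - a)./2)%N.
Proof.
move=> ab eo; have ho : ~~ odd (b - a) by rewrite oddB // eo addbb.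
have := even_halfK ho; rewrite -muln2; lia.
Qed.

Lemma qd_zero d : qd d (fun _ => 0) = 0.
Proof. by rewrite qd4 expr0n /= !mulr0 !addr0. Qed.

Lemma diag_large p d : prime p -> (forall i, (i < 4)%N -> d i != 0) ->
  exists N, forall T : int, (p%:Z ^+ N %| T)%Z -> Rep (qd d) p T.
Proof.
move=> pp hd.
pose e := fun i => logn p `|d i|.
pose u := fun i => (d i %/ p%:Z ^+ e i)%Z.
have hdu : forall i, (i < 4)%N -> d i = p%:Z ^+ e i * u i /\ ~~ (p%:Z %| u i)%Z.
  by move=> i hi; apply: pdecomp => //; exact: hd.
pose me := (\max_(i < 4) e i)%N.
exists (me + 3)%N => T hT.
have hei : forall i, (i < 4)%N -> (e i <= me)%N.
  by move=> i hi; rewrite /me; exact: (leq_bigmax (F := fun j : 'I_4 => e j) (Ordinal hi)).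
clearbody me.
case: (eqVneq T 0) => [-> | T0]; first exact: (Rep0 _ (qd_zero d)).
have [eT ht] := pdecomp pp T0.
set m := logn p `|T| in eT ht; set tau := (T %/ p%:Z ^+ m)%Z in eT ht.
have hm : (me + 3 <= m)%N.
  by move: hT; rewrite -PoszX dvdzE /= pfactor_dvdn // absz_gt0.
pose pi := (2 <= size (fidx (fun i => odd (e i))))%N.
have hpi : (2 <= size (fidx (fun i => odd (e i) == pi)))%N.
  case hp : pi; move: hp; rewrite /pi => h.
    by rewrite /fidx (eq_filter (a2 := fun i => odd (e i))) // => x; rewrite eqb_id.
  rewrite /fidx (eq_filter (a2 := fun i => ~~ odd (e i))); last by move=> x; rewrite eqbF_neg.
  have := fidx_size (fun i => odd (e i)); move/negbT: h; rewrite -ltnNge /fidx.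
  move: (size _) (size _) => a b; clear; lia.
pose E := if odd (m - 2) == pi then (m - 2)%N else (m - 3)%N.
have hE1 : odd E = pi.
  rewrite /E; case: eqP => // /eqP h.
  have -> : (m - 3 = (m - 2).-1)%N by clear -hm; lia.
  have : (0 < m - 2)%N by clear -hm; lia.
  case: (m - 2)%N h => [|k] //= h _; move: h.
  by move: (pi) (odd k) => q b; case: q; case: b.
have hE2 : (me <= E)%N by rewrite /E; case: ifP => _; clear -hm; lia.
have hE3 : m = (E + 2)%N \/ m = (E + 3)%N by rewrite /E; case: ifP => _; clear -hm; lia.
pose f := fun i => odd (e i) != pi.
pose k := fun i => ((E + f i - e i)./2)%N.
have hk : forall i, (i < 4)%N -> (E + f i = e i + 2 * k i)%N.
  move=> i hi; apply: even_diff.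
    apply: leq_trans (hei i hi) _; apply: leq_trans hE2 _; exact: leq_addr.
  by rewrite oddD hE1 /f; move: (pi) (odd (e i)) => q b; case: q; case: b.
have hA : (2 <= size (fidx (fun i => ~~ f i)))%N.
  by rewrite /fidx (eq_filter (a2 := fun i => odd (e i) == pi)) // => x; rewrite /f negbK.
have hcore : Rep (qd (dpp p f u)) p (p%:Z ^+ 2 * tau) /\ Rep (qd (dpp p f u)) p (p%:Z ^+ 3 * tau).
  have hu : forall i, (i < 4)%N -> ~~ (p%:Z %| u i)%Z by move=> i hi; case: (hdu i hi).
  case: (even_prime pp) => [p2 | po].
    by move: hu ht; rewrite p2 => hu ht; apply: core_two.
  exact: core_odd.
have hsc : forall c, Rep (qd (dpp p f u)) p c -> Rep (qd d) p (p%:Z ^+ E * c).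
  move=> c; apply: (Rep_scale (s := fun i => p%:Z ^+ k i)) => i hi.
  rewrite /dpp; case: (hdu i hi) => -> _.
  transitivity (p%:Z ^+ (e i + 2 * k i) * u i).
    by rewrite exprD mulnC exprM; ring.
  by rewrite -hk // exprD; ring.
rewrite eT; case: hE3 => ->.
  by rewrite exprD -mulrA; apply: hsc; case: hcore.
by rewrite exprD -mulrA; apply: hsc; case: hcore.
Qed.

Definition Bf (n : nat) (G : 'M[int]_n) (x y : 'cV[int]_n) : int := (x^T *m G *m y) 0 0.

Lemma qformE n (G : 'M[int]_n) x : qform G x = Bf G x x.
Proof. by []. Qed.

Lemma BfDl n (G : 'M[int]_n) x y z : Bf G (x + y) z = Bf G x z + Bf G y z.
Proof. by rewrite /Bf linearD /= !mulmxDl mxE. Qed.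
Lemma BfDr n (G : 'M[int]_n) x y z : Bf G z (x + y) = Bf G z x + Bf G z y.
Proof. by rewrite /Bf !mulmxDr mxE. Qed.
Lemma BfZl n (G : 'M[int]_n) a x z : Bf G (a *: x) z = a * Bf G x z.
Proof. by rewrite /Bf linearZ /= -!scalemxAl mxE. Qed.
Lemma BfZr n (G : 'M[int]_n) a x z : Bf G z (a *: x) = a * Bf G z x.
Proof. by rewrite /Bf -!scalemxAr mxE. Qed.
Lemma BfNl n (G : 'M[int]_n) x z : Bf G (- x) z = - Bf G x z.
Proof. by rewrite -scaleN1r BfZl mulN1r. Qed.
Lemma BfBl n (G : 'M[int]_n) x y z : Bf G (x - y) z = Bf G x z - Bf G y z.
Proof. by rewrite BfDl BfNl. Qed.
Lemma BfC n (G : 'M[int]_n) x y : symmetric_gram G -> Bf G x y = Bf G y x.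
Proof.
move=> sG; rewrite /Bf -[in LHS](trmxK (x^T *m G *m y)) mxE.
by rewrite !trmx_mul trmxK sG mulmxA.
Qed.

Definition step n (G : 'M[int]_n) (v w : 'cV[int]_n) : 'cV[int]_n :=
  Bf G v v *: w - Bf G w v *: v.

Lemma step_orth n (G : 'M[int]_n) v w : Bf G (step G v w) v = 0.
Proof. by rewrite /step BfBl !BfZl mulrC subrr. Qed.

Lemma step_pres n (G : 'M[int]_n) v w u :
  Bf G w u = 0 -> Bf G v u = 0 -> Bf G (step G v w) u = 0.
Proof. by move=> h1 h2; rewrite /step BfBl !BfZl h1 h2 !mulr0 subrr. Qed.

Lemma step_entry n (G : 'M[int]_n) v w r :
  (step G v w) r 0 = Bf G v v * w r 0 - Bf G w v * v r 0.
Proof. by rewrite /step !mxE. Qed.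

Definition ev n (k : 'I_n) : 'cV[int]_n := delta_mx k 0.

Lemma ev_entry n (k r : 'I_n) : ev k r 0 = (r == k)%:R.
Proof. by rewrite /ev mxE eqxx andbT. Qed.

Lemma Q_pos n (G : 'M[int]_n) (v : 'cV[int]_n) r : pos_def G -> v r 0 != 0 -> 0 < Bf G v v.
Proof.
move=> pd hv; apply: pd; apply/eqP => h; move: hv; by rewrite h mxE eqxx.
Qed.

Lemma gram4 n (G : 'M[int]_n) : (4 <= n)%N -> symmetric_gram G -> pos_def G ->
  exists V : nat -> 'cV[int]_n,
    (forall i, (i < 4)%N -> 0 < Bf G (V i) (V i)) /\
    (forall i j, (i < 4)%N -> (j < 4)%N -> i != j -> Bf G (V i) (V j) = 0).
Proof.
move=> hn sG pd.
have h0 : (0 < n)%N by apply: leq_trans hn.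
have h1 : (1 < n)%N by apply: leq_trans hn.
have h2 : (2 < n)%N by apply: leq_trans hn.
have h3 : (3 < n)%N by [].
pose o0 := Ordinal h0; pose o1 := Ordinal h1; pose o2 := Ordinal h2; pose o3 := Ordinal h3.
have n10 : (o1 == o0) = false by [].
have n20 : (o2 == o0) = false by [].
have n21 : (o2 == o1) = false by [].
have n30 : (o3 == o0) = false by [].
have n31 : (o3 == o1) = false by [].
have n32 : (o3 == o2) = false by [].
have [v0 dv0] : {v | v = ev o0} by exists (ev o0).
have [v1 dv1] : {v | v = step G v0 (ev o1)} by eexists.
have [w2 dw2] : {v | v = step G v0 (ev o2)} by eexists.
have [v2 dv2] : {v | v = step G v1 w2} by eexists.
have [w3 dw3] : {v | v = step G v0 (ev o3)} by eexists.
have [w3' dw3'] : {v | v = step G v1 w3} by eexists.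
have [v3 dv3] : {v | v = step G v2 w3'} by eexists.
have q0 : 0 < Bf G v0 v0 by apply: (Q_pos (r := o0)) => //; rewrite dv0 ev_entry eqxx.
have e10 : v1 o1 0 = Bf G v0 v0.
  by rewrite dv1 (step_entry G v0 (ev o1) o1) !ev_entry eqxx dv0 ev_entry n10 mulr1 mulr0 subr0.
have q1 : 0 < Bf G v1 v1 by apply: (Q_pos (r := o1)) => //; rewrite e10 gt_eqF.
have ew2 : w2 o2 0 = Bf G v0 v0.
  by rewrite dw2 (step_entry G v0 (ev o2) o2) !ev_entry eqxx dv0 ev_entry n20 mulr1 mulr0 subr0.
have e12 : v1 o2 0 = 0.
  by rewrite dv1 (step_entry G v0 (ev o1) o2) !ev_entry n21 dv0 ev_entry n20 mulr0 mulr0 subr0.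
have e22 : v2 o2 0 = Bf G v1 v1 * Bf G v0 v0.
  by rewrite dv2 (step_entry G v1 w2 o2) ew2 e12 mulr0 subr0.
have q2 : 0 < Bf G v2 v2 by apply: (Q_pos (r := o2)) => //; rewrite e22 mulf_neq0 // gt_eqF.
have ew3 : w3 o3 0 = Bf G v0 v0.
  by rewrite dw3 (step_entry G v0 (ev o3) o3) !ev_entry eqxx dv0 ev_entry n30 mulr1 mulr0 subr0.
have e13 : v1 o3 0 = 0.
  by rewrite dv1 (step_entry G v0 (ev o1) o3) !ev_entry n31 dv0 ev_entry n30 mulr0 mulr0 subr0.
have ew3' : w3' o3 0 = Bf G v1 v1 * Bf G v0 v0.
  by rewrite dw3' (step_entry G v1 w3 o3) ew3 e13 mulr0 subr0.
have ew23 : w2 o3 0 = 0.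
  by rewrite dw2 (step_entry G v0 (ev o2) o3) !ev_entry n32 dv0 ev_entry n30 mulr0 mulr0 subr0.
have e23 : v2 o3 0 = 0 by rewrite dv2 (step_entry G v1 w2 o3) ew23 e13 mulr0 mulr0 subr0.
have e33 : v3 o3 0 = Bf G v2 v2 * (Bf G v1 v1 * Bf G v0 v0).
  by rewrite dv3 (step_entry G v2 w3' o3) ew3' e23 mulr0 subr0.
have q3 : 0 < Bf G v3 v3.
  by apply: (Q_pos (r := o3)) => //; rewrite e33 !mulf_neq0 // gt_eqF.
have b10 : Bf G v1 v0 = 0 by rewrite dv1; apply: step_orth.
have b21 : Bf G v2 v1 = 0 by rewrite dv2; apply: step_orth.
have b20 : Bf G v2 v0 = 0 by rewrite dv2; apply: step_pres => //; rewrite dw2; apply: step_orth.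
have b32 : Bf G v3 v2 = 0 by rewrite dv3; apply: step_orth.
have b31 : Bf G v3 v1 = 0 by rewrite dv3; apply: step_pres => //; rewrite dw3'; apply: step_orth.
have b30 : Bf G v3 v0 = 0.
  rewrite dv3; apply: step_pres => //; rewrite dw3'; apply: step_pres => //.
  rewrite dw3; apply: step_orth.
pose V := fun i : nat => nth v3 [:: v0; v1; v2; v3] i.
exists V; split.
  move=> [|[|[|[|i]]]] hi; rewrite /V /= //.
move=> i j hi hj ij.
have f4 : forall k, (k.+4 < 4)%N = false by move=> k; rewrite !ltnS.
move: i j hi hj ij => [|[|[|[|i]]]] [|[|[|[|j]]]] hi hj ij; rewrite ?f4 // in hi hj ij; rewrite /V /=.
all: try done.
all: by rewrite BfC.
Qed.


Lemma Bf_ev n (G : 'M[int]_n) x i : Bf G x (ev i) = (x^T *m G) 0 i.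
Proof. by rewrite /Bf /ev -colE mxE. Qed.

Lemma Bf_upd n (G : 'M[int]_n) x i h : symmetric_gram G ->
  Bf G (x + h *: ev i) (x + h *: ev i) =
  Bf G x x + (Bf G x (ev i) *+ 2) * h + Bf G (ev i) (ev i) * h ^+ 2.
Proof.
move=> sG; rewrite !BfDl !BfDr !BfZl !BfZr (BfC (ev i) x sG).
rewrite mulr2n; ring.
Qed.

Lemma adj_dvd n (G : 'M[int]_n) (x : 'cV[int]_n) (P : int) :
  (forall i, (P %| Bf G x (ev i))%Z) -> forall r, (P %| \det G * x r ord0)%Z.
Proof.
move=> h r.
have e : x^T *m G *m \adj G = \det G *: x^T by rewrite -mulmxA mul_mx_adj mul_mx_scalar.
have := congr1 (fun M : 'M[int]_(1,n) => M ord0 r) e; rewrite [in RHS]mxE [x^T _ _]mxE mxE => <-.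
apply: rpred_sum => s _; apply: dvdz_mulr; rewrite -Bf_ev; exact: h.
Qed.

Lemma locE n (G : 'M[int]_n) p a :
  loc_repr G p a <-> forall k, exists x, (p%:Z ^+ k %| qform G x - a)%Z.
Proof.
split=> h k; have [x hx] := h k; exists x.
  by move/eqP: hx; rewrite eqz_mod_dvd PoszX.
by apply/eqP; rewrite eqz_mod_dvd PoszX.
Qed.

Lemma qform0 n (G : 'M[int]_n) : qform G 0 = 0.
Proof. by rewrite /qform mulmx0 mxE. Qed.

Lemma exact_log p (a : int) : prime p -> a != 0 ->
  (p%:Z ^+ logn p `|a| %| a)%Z /\ ~~ (p%:Z ^+ (logn p `|a|).+1 %| a)%Z.
Proof.
move=> pp a0; have a0' : (0 < `|a|)%N by rewrite absz_gt0.
by rewrite -!PoszX !dvdzE /= pfactor_dvdnn pfactor_dvdn // ltnn.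
Qed.

Lemma logn_le p (a : int) k : prime p -> a != 0 -> ~~ (p%:Z ^+ k.+1 %| a)%Z -> (logn p `|a| <= k)%N.
Proof.
move=> pp a0; have a0' : (0 < `|a|)%N by rewrite absz_gt0.
by rewrite -PoszX dvdzE /= pfactor_dvdn // -ltnNge ltnS.
Qed.

Lemma logn2 p : prime p -> (logn p 2 <= 1)%N.
Proof.
move=> pp; rewrite leqNgt; apply/negP => h.
have : (p ^ 2 %| 2)%N by rewrite pfactor_dvdn.
move/dvdn_leq => /(_ isT); have := prime_gt1 pp.
rewrite expnS expn1; clear; nia.
Qed.

Lemma periodic n (G : 'M[int]_n) p NB b b' : prime p -> symmetric_gram G -> \det G != 0 ->
  (forall T, (p%:Z ^+ NB %| T)%Z -> loc_repr G p T) ->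
  (p%:Z ^+ (NB + 2 * logn p `|\det G| + 4) %| b - b')%Z -> loc_repr G p b -> loc_repr G p b'.
Proof.
move=> pp sG dG hL.
have [dl edl] : {k | logn p `|\det G| = k} by eexists.
rewrite edl.
have [N eN] : {k | (NB + 2 * dl + 4)%N = k} by eexists.
rewrite eN => hbb hb.
have hNB : (p%:Z ^+ NB %| p%:Z ^+ N)%Z by apply: dvdz_exp2l; rewrite -eN -addnA leq_addr.
case: (boolP (p%:Z ^+ NB %| b)%Z) => hb0.
  apply: hL; have -> : b' = b - (b - b') by ring.
  by rewrite rpredB // (dvdz_trans hNB).
have [x hx] := (iffLR (locE _ _ _) hb) N.
have x0 : exists r, x r ord0 != 0.
  case: (boolP [exists r, x r ord0 != 0]) => [/existsP //|]; rewrite negb_exists => /forallP h0.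
  have xz : x = 0 by apply/matrixP => r c; rewrite (ord1 c) mxE; apply/eqP; move: (h0 r); rewrite negbK.
  exfalso; move/negP: hb0; apply; rewrite xz qform0 sub0r rpredN in hx.
  exact: dvdz_trans hNB hx.
pose P := fun j => ~~ [forall r, (p%:Z ^+ j.+1 %| x r ord0)%Z].
have exP : exists j, P j.
  have [r xr] := x0; exists (logn p `|x r ord0|); rewrite /P negb_forall; apply/existsP; exists r.
  by have [] := exact_log pp xr.
case: (ex_minnP exP) => j Pj minj.
have hj : forall r, (p%:Z ^+ j %| x r ord0)%Z.
  case: j Pj minj => [|j] Pj minj r; first by rewrite expr0 dvd1z.
  have : ~~ P j by apply/negP => /minj; rewrite ltnn.
  by rewrite negbK => /forallP.
have [i0 hi0] : exists i0, ~~ (p%:Z ^+ j.+1 %| x i0 ord0)%Z.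
  by move: Pj; rewrite /P negb_forall => /existsP.
pose y : 'cV[int]_n := \col_r (x r ord0 %/ p%:Z ^+ j)%Z.
have exy : x = p%:Z ^+ j *: y.
  by apply/matrixP => r c; rewrite (ord1 c) !mxE mulrC divzK.
have ey : forall r, x r ord0 = p%:Z ^+ j * y r ord0.
  by move=> r; rewrite [in LHS]exy mxE.
have ny : ~~ (p%:Z %| y i0 ord0)%Z.
  apply: contra hi0 => h; rewrite ey exprSr; exact: dvdz_mul (dvdzz _) h.
have hQ : qform G x = p%:Z ^+ (2 * j) * qform G y.
  by rewrite !qformE exy BfZl BfZr mulrA -exprD addnn -mul2n.
have h2j : (2 * j < NB)%N.
  rewrite ltnNge; apply/negP => hle; move/negP: hb0; apply.
  have -> : b = qform G x - (qform G x - b) by ring.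
  rewrite rpredB //; last exact: dvdz_trans hNB hx.
  by rewrite hQ dvdz_mulr // dvdz_exp2l.
have [hdl nD] := pdecomp pp dG.
rewrite edl in hdl nD.
have [i hi] : exists i, ~~ (p%:Z ^+ (j + dl).+1 %| Bf G x (ev i))%Z.
  case: (boolP [exists i, ~~ (p%:Z ^+ (j + dl).+1 %| Bf G x (ev i))%Z]) => [/existsP //|].
  rewrite negb_exists => /forallP h; exfalso.
  have := adj_dvd (P := p%:Z ^+ (j + dl).+1) (fun i => negbNE (h i)) i0.
  rewrite hdl ey.
  have eq3 : forall D' yy : int, p%:Z ^+ dl * D' * (p%:Z ^+ j * yy) = p%:Z ^+ (j + dl) * (D' * yy).
    by move=> D' yy; rewrite exprD; ring.
  rewrite eq3.
  rewrite exprSr dvdz_mul2l; last by rewrite expf_neq0 //; apply: lt0r_neq0; rewrite ltz_nat prime_gt0.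
  by apply/negP; apply: ndM.
have [B eB] : {B | Bf G x (ev i) = B} by eexists.
rewrite eB in hi.
have B0 : B != 0 by apply/eqP => e; move: hi; rewrite e rpred0.
have [beta ebeta] : {beta | B *+ 2 = beta} by eexists.
have beta0 : beta != 0 by rewrite -ebeta -mulr_natr mulf_neq0.
have [hb1 hb2] := exact_log pp beta0.
have [t et] : {t | logn p `|beta| = t} by eexists.
rewrite et in hb1 hb2.
have ht : (t <= j + dl + 1)%N.
  rewrite -et -ebeta -mulr_natr abszM lognM ?absz_gt0 //.
  have := logn_le pp B0 hi; have := logn2 pp.
  move: (logn p `|B|) (logn p 2) => u1 u2; clear; lia.
have hA : (p%:Z ^+ (2 * t).+1 %| qform G x - b')%Z.
  have -> : qform G x - b' = (qform G x - b) + (b - b') by ring.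
  have hle : ((2 * t).+1 <= N)%N by move: ht h2j; rewrite -eN; clear; lia.
  by rewrite rpredD // (dvdz_trans (dvdz_exp2l _ hle)).
apply/locE => k.
have [h [_ hh]] := hensel (Bf G (ev i) (ev i)) pp hb1 hb2 hA k.
exists (x + h *: ev i); rewrite qformE Bf_upd // eB.
have -> : Bf G x x + B *+ 2 * h + Bf G (ev i) (ev i) * h ^+ 2 - b' =
  qform G x - b' + beta * h + Bf G (ev i) (ev i) * h ^+ 2 by rewrite -ebeta qformE; ring.
apply: dvdz_trans hh; apply: dvdz_exp2l; rewrite addnC; exact: leq_addr.
Qed.

Lemma detG_neq0 n (G : 'M[int]_n) : pos_def G -> \det G != 0.
Proof.
move=> pd; apply/negP => /det0P [v v0 hv].
have x0 : v^T != 0 by apply: contra v0 => /eqP h; rewrite -[v]trmxK h linear0.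
by have := pd _ x0; rewrite /qform trmxK hv mul0mx mxE ltxx.
Qed.

Lemma transfer n (G : 'M[int]_n) (V : nat -> 'cV[int]_n) p c : symmetric_gram G ->
  (forall i j, (i < 4)%N -> (j < 4)%N -> i != j -> Bf G (V i) (V j) = 0) ->
  Rep (qd (fun i => Bf G (V i) (V i))) p c -> loc_repr G p c.
Proof.
move=> sG ho R; apply/locE => k; have [z hz] := R k.
exists (z 0%N *: V 0%N + z 1%N *: V 1%N + z 2%N *: V 2%N + z 3%N *: V 3%N).
suff -> : qform G (z 0%N *: V 0%N + z 1%N *: V 1%N + z 2%N *: V 2%N + z 3%N *: V 3%N) =
  qd (fun i => Bf G (V i) (V i)) z by [].
rewrite qformE !BfDl !BfDr !BfZl !BfZr qd4.
rewrite (ho 0%N 1%N) // (ho 0%N 2%N) // (ho 0%N 3%N) // (ho 1%N 0%N) // (ho 1%N 2%N) // (ho 1%N 3%N) //.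
rewrite (ho 2%N 0%N) // (ho 2%N 1%N) // (ho 2%N 3%N) // (ho 3%N 0%N) // (ho 3%N 1%N) // (ho 3%N 2%N) //.
ring.
Qed.

Definition Good n (G : 'M[int]_n) p N :=
  (forall T : int, (p%:Z ^+ N %| T)%Z -> loc_repr G p T) /\
  (forall b b' : int, (p%:Z ^+ N %| b - b')%Z -> loc_repr G p b -> loc_repr G p b').

Lemma Good_mono n (G : 'M[int]_n) p N N' : (N <= N')%N -> Good G p N -> Good G p N'.
Proof.
move=> hle [h1 h2]; have hd : (p%:Z ^+ N %| p%:Z ^+ N')%Z by apply: dvdz_exp2l.
split=> [T hT | b b' hb]; [apply: h1 | apply: h2]; exact: dvdz_trans hd _.
Qed.

Lemma Good_list n (G : 'M[int]_n) (l : seq nat) :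
  (forall p, p \in l -> exists N, Good G p N) -> exists N, forall p, p \in l -> Good G p N.
Proof.
elim: l => [|a l IH] h; first by exists 0%N.
have [N1 h1] := h a (mem_head a l).
have [N2 h2] := IH (fun p hp => h p (@mem_behead _ (a :: l) p hp)).
exists (maxn N1 N2) => p; rewrite inE => /orP [/eqP -> | hp].
  by apply: Good_mono h1; apply: leq_maxl.
by apply: Good_mono (h2 p hp); apply: leq_maxr.
Qed.

Lemma cfilter (T : eqType) (P : T -> Prop) (l : seq T) :
  exists s : seq T, forall x, x \in s <-> (x \in l /\ P x).
Proof.
elim: l => [|a l [s hs]]; first by exists [::] => x; rewrite in_nil; split => // [[]].
case: (classic (P a)) => ha.
  exists (a :: s) => x; rewrite !inE; split.
    case/orP => [/eqP -> | h1]; first by rewrite eqxx.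
    by have [h2 h3] := (iffLR (hs x) h1); rewrite h2 orbT.
  case=> /orP [/eqP -> | h1] h2; first by rewrite eqxx.
  by have := (iffRL (hs x) (conj h1 h2)) => ->; rewrite orbT.
exists s => x; rewrite inE; split.
  by move=> h1; have [h2 h3] := (iffLR (hs x) h1); rewrite h2 orbT.
case=> /orP [/eqP -> | h1] h2 //; exact: (iffRL (hs x) (conj h1 h2)).
Qed.

Lemma prime_dvd_pexp q p N : prime q -> prime p -> (q %| p ^ N)%N -> q = p.
Proof.
move=> pq pp; rewrite Euclid_dvdX // => /andP [h _]; apply/eqP.
by rewrite -dvdn_prime2.
Qed.

Unset Implicit Arguments.
Theorem proposition1 (n : nat) (G : 'M[int]_n) :
  (4 <= n)%N -> symmetric_gram G -> pos_def G -> scale_one G ->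
  exists s : seq (nat * nat),
    (forall am, am \in s ->
       [/\ (0 < am.1)%N, (am.1 < am.2)%N & admissible am.1 am.2]) /\
    (forall b : nat, (0 < b)%N ->
       (~ in_Q_gen G (b%:Z) <->
        exists2 am, am \in s & in_AP am.1 am.2 b)).
Proof.
move=> hn sG pd _.
have [V [hpos ho]] := gram4 hn sG pd.
have hd : forall i, (i < 4)%N -> Bf G (V i) (V i) != 0 by move=> i hi; rewrite gt_eqF // hpos.
have dG := detG_neq0 pd.
pose D := Bf G (V 0%N) (V 0%N) * Bf G (V 1%N) (V 1%N) * Bf G (V 2%N) (V 2%N) * Bf G (V 3%N) (V 3%N) * 2%:Z.
have D0 : D != 0 by rewrite /D !mulf_neq0 // hd.
have good_p : forall p, prime p -> p \notin primes `|D| -> forall c, loc_repr G p c.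
  move=> p pp hp c.
  have nD : ~~ (p%:Z %| D)%Z by rewrite dvdzE /=; move: hp; rewrite mem_primes pp absz_gt0 D0.
  have po : odd p.
    case: (even_prime pp) => // p2; exfalso; move/negP: nD; apply; rewrite /D p2; exact: dvdz_mull.
  have nd : forall i, (i < 4)%N -> ~~ (p%:Z %| Bf G (V i) (V i))%Z.
    move=> i hi; apply: contra nD => h; rewrite /D.
    move: i hi h => [|[|[|[|i]]]] // _ h.
    - by apply: dvdz_mulr; apply: dvdz_mulr; apply: dvdz_mulr; apply: dvdz_mulr.
    - by apply: dvdz_mulr; apply: dvdz_mulr; apply: dvdz_mulr; apply: dvdz_mull.
    - by apply: dvdz_mulr; apply: dvdz_mulr; apply: dvdz_mull.
    - by apply: dvdz_mulr; apply: dvdz_mull.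
  apply: (transfer sG ho).
  by apply: (ternary_rep (i := 0%N) (j := 1%N) (l := 2%N)) => //; apply: nd.
have bad_p : forall p, p \in primes `|D| -> exists N, Good G p N.
  move=> p; rewrite mem_primes => /and3P [pp _ _].
  have [NB hNB] := diag_large pp hd.
  have hL : forall T, (p%:Z ^+ NB %| T)%Z -> loc_repr G p T.
    by move=> T hT; apply: (transfer sG ho); apply: hNB.
  exists (NB + 2 * logn p `|\det G| + 4)%N; split.
    move=> T hT; apply: hL; apply: dvdz_trans hT; apply: dvdz_exp2l.
    by rewrite -addnA leq_addr.
  by move=> b b' hb; apply: (periodic pp sG dG hL hb).
have [N0 hN0] := Good_list bad_p.
pose N := N0.+1.
have hG : forall p, prime p -> Good G p N.
  move=> p pp; case: (boolP (p \in primes `|D|)) => hp.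
    by apply: Good_mono (hN0 p hp); apply: leqnSn.
  by split=> *; apply: good_p.
pose l := flatten [seq [seq (r, (p ^ N)%N) | r <- iota 1 (p ^ N).-1] | p <- primes `|D|].
have [s hs] := cfilter (fun am : nat * nat => ~ loc_repr G (pdiv am.2) (am.1)%:Z) l.
have meml : forall am, am \in l -> exists p r, [/\ p \in primes `|D|, (0 < r)%N, (r < p ^ N)%N & am = (r, (p ^ N)%N)].
  move=> am /flatten_mapP [p hp] /mapP [r]; rewrite mem_iota => /andP [r1 r2] ->.
  exists p, r; split => //.
  have : (0 < p ^ N)%N by rewrite expn_gt0 prime_gt0 //; move: hp; rewrite mem_primes => /and3P [].
  by move: r2; clear; lia.
have pdivN : forall p, prime p -> pdiv (p ^ N) = p by move=> p pp; rewrite pdiv_pfactor.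
exists s; split.
  move=> am /hs [/meml [p [r [hp r0 rN ->]]]] /= nr.
  have pp : prime p by move: hp; rewrite mem_primes => /and3P [].
  rewrite pdivN // in nr.
  split => // q pq hq; have eq := prime_dvd_pexp pq pp hq; subst q.
  rewrite pfactorK // ltnNge; apply/negP => hle; apply: nr.
  apply: (hG p pp).1; rewrite -PoszX dvdzE /=; by rewrite pfactor_dvdn.
move=> b b0; split.
  move=> nq.
  have [p [pp np]] : exists p, prime p /\ ~ loc_repr G p b%:Z.
    apply: NNPP => H; apply: nq => p pp; apply: NNPP => h; apply: H; by exists p; split.
  have hp : p \in primes `|D|.
    by apply: contraT => hp; exfalso; apply: np; apply: good_p.
  have pN : (0 < p ^ N)%N by rewrite expn_gt0 prime_gt0.
  set r := (b %% p ^ N)%N.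
  have eb : b = (b %/ p ^ N * p ^ N + r)%N by rewrite /r -divn_eq.
  have r0 : (0 < r)%N.
    rewrite lt0n; apply/negP => /eqP r0; apply: np; apply: (hG p pp).1.
    by rewrite eb r0 addn0 PoszM -PoszX dvdz_mull.
  have rN : (r < p ^ N)%N by rewrite /r ltn_pmod.
  exists (r, (p ^ N)%N); last by exists (b %/ p ^ N)%N => /=; rewrite {1}eb addnC mulnC.
  apply/hs; split.
    apply/flatten_mapP; exists p => //; apply/mapP; exists r => //.
    rewrite mem_iota; move: r0 rN pN; clear; lia.
  rewrite /= pdivN // => hr; apply: np.
  apply: (hG p pp).2 hr.
  have e2 : b%:Z = ((b %/ p ^ N)%N)%:Z * p%:Z ^+ N + r%:Z by rewrite {1}eb PoszD PoszM PoszX.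
  rewrite e2.
  have -> : forall q P rr : int, rr - (q * P + rr) = - (q * P) by move=> *; ring.
  by rewrite rpredN dvdz_mull.
case=> am /hs [/meml [p [r [hp r0 rN ->]]]] /= nr [x ex] hq.
have pp : prime p by move: hp; rewrite mem_primes => /and3P [].
rewrite pdivN // in nr; apply: nr.
apply: (hG p pp).2 (hq p pp).
rewrite ex PoszD PoszM PoszX.
have -> : forall q P rr : int, rr + P * q - rr = P * q by move=> *; ring.
by rewrite dvdz_mulr.
Qed.
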